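(* Let $I=(\mathcal{M},[N],(d_i)_{i\in[N]})$ be a non-positive instance with $\mathcal{M}\ne\emptyset$, and let $(S_1,\ldots,S_N)$ be the allocation produced by the round-robin protocol in which agents pick in the order $1,2,\dots,N,1,2,\dots,N,\dots$ and at her turn agent $i$ receives an unallocated item $j$ maximizing $d_i(j)$ (i.e. of least disutility; ties broken arbitrarily), until all items are allocated. Then for all $i\in[N]$, $$d_i(S_i)\ge\Big(2-\frac1N\Big)\cdot MmS_{d_i}^N(\mathcal{M}),$$ and the constant $2-\frac1N$ cannot be improved in general: for every $N\ge 1$ there is a non-positive instance with $N$ agents where equality holds for some agent with $MmS_{d_i}^N(\mathcal{M})<0$.
   Context: A non-positive instance: finite item set $\mathcal{M}$, agents $[N]=\{1,\dots,N\}$, additive utilities $d_i$ with $d_i(j)\le0$ for all items (chores). $\Pi_N(\mathcal{M})$ is the set of ordered $N$-partitions of $\mathcal{M}$ (parts may be empty); $MmS_{d}^N(\mathcal{M}):=\max_{(T_1,\ldots,T_N)\in\Pi_N(\mathcal{M})}\min_{j} d(T_j)$. *)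

(* Defs.v *)
From HB Require Import structures.
From mathcomp Require Import all_boot all_order all_algebra.
Set Implicit Arguments. Unset Strict Implicit. Unset Printing Implicit Defensive.
Import Order.TTheory GRing.Theory Num.Theory.
Local Open Scope ring_scope.

Section Defs.
Variable R : realFieldType.

(* minimum / maximum of F over a finite type I (default 0 only if I is empty,
   which never happens in our uses) *)
Definition minover (I : finType) (F : I -> R) : R :=
  if enum I is x :: _ then \big[Num.min/F x]_(i : I) F i else 0.
Definition maxover (I : finType) (F : I -> R) : R :=
  if enum I is x :: _ then \big[Num.max/F x]_(i : I) F i else 0.

Definition util (M : finType) (u : M -> R) (A : {set M}) : R :=
  \sum_(x in A) u x.

(* ordered N-partitions (T_1,...,T_N) of M (parts may be empty) are encoded
   by assignment functions f : M -> 'I_N, with T_j = f^-1(j). *)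
Definition part (M : finType) (N : nat) (f : {ffun M -> 'I_N}) (j : 'I_N)
  : {set M} := [set x | f x == j].

Definition MmS (M : finType) (N : nat) (u : M -> R) : R :=
  maxover (fun f : {ffun M -> 'I_N} => minover (fun j : 'I_N => util u (part f j))).

Definition nonpositive (M : finType) (N : nat) (d : 'I_N -> M -> R) : Prop :=
  forall i x, d i x <= 0.

(* p is a run of the round-robin protocol: p lists all items in the order
   they are picked; the pick at (0-based) turn k is made by agent k mod N,
   and the picked item maximizes the picker's utility among the items not
   yet allocated (ties broken arbitrarily). *)
Definition round_robin_run (M : finType) (N : nat) (d : 'I_N -> M -> R)
  (p : seq M) : Prop :=
  perm_eq p (enum M) /\
  forall (s1 : seq M) (x : M) (s2 : seq M), p = s1 ++ x :: s2 ->
    forall i : 'I_N, (size s1 %% N)%N = i ->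
      forall y, y \in x :: s2 -> d i y <= d i x.

Definition rr_bundle (M : finType) (N : nat) (p : seq M) (i : 'I_N) : {set M} :=
  [set x | (index x p %% N)%N == i].

End Defs.

(* Main.v *)
Require Import Defs.
From HB Require Import structures.
From mathcomp Require Import all_boot all_order all_algebra.
From mathcomp Require Import ring lra zify.
Import Order.TTheory GRing.Theory Num.Theory.
Local Open Scope ring_scope.

Lemma mod_neq (N k t : nat) : (k < t)%N -> (t < k + N)%N -> (t %% N != k %% N)%N.
Proof.
move=> h1 h2; rewrite -(subnKC (ltnW h1)) -[X in _ != (X %% N)%N]addn0 eqn_modDl mod0n.
rewrite modn_small; last by rewrite ltn_subLR // ltnW.
by rewrite subn_eq0 -ltnNge.
Qed.
Arguments mod_neq {N k t}.

Lemma key (R : realFieldType) (b : nat -> R) (mu : R) (N i m : nat) :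
  (0 < N)%N -> mu <= 0 -> (forall t, (t < m)%N -> mu <= b t <= 0) ->
  (forall t u, (t %% N)%N = i -> (t <= u)%N -> (u < m)%N -> b u <= b t) ->
  forall k, \sum_(k <= t < m) b t + (N-1)%:R * mu <=
            N%:R * \sum_(k <= t < m | (t %% N)%N == i) b t.
Proof.
move=> N0 mu0 hb hrr k.
have [n] := ubnP (m - k); elim: n k => // n IH k hn.
have [mk|km] := leqP m k.
  rewrite !big_geq // mulr0 add0r.
  by rewrite mulr_ge0_le0 // ler0n.
have [hk|hk] := eqVneq ((k %% N)%N) i.
- rewrite [X in _ <= _ * X]big_ltn_cond // [X in X + _ <= _]big_ltn // hk eqxx.
  have bk := hb _ km; case/andP: bk => mub bk0.
  have [kNm|mkN] := ltnP (k + N)%N m.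
  + have Ek1 : (k.+1 <= k + N)%N by rewrite -addn1 leq_add2l.
    have Ek2 : (k + N <= m)%N by exact: ltnW.
    have E1 : \sum_(k.+1 <= t < m) b t = \sum_(k.+1 <= t < k+N) b t + \sum_(k+N <= t < m) b t.
      by rewrite (big_cat_nat Ek1 Ek2).
    have E2 : \sum_(k.+1 <= t < m | (t %% N)%N == i) b t = \sum_(k+N <= t < m | (t %% N)%N == i) b t.
      rewrite (big_cat_nat Ek1 Ek2) /= big_nat_cond big1 ?add0r //.
      move=> t /andP[/andP[h1 h2] /eqP]; rewrite -hk => h3.
      by have := mod_neq h1 h2; rewrite h3 eqxx.
    rewrite E1 E2 addrA.
    have IH' := IH (k + N)%N ltac:(lia).
    have h1 : b k + \sum_(k.+1 <= t < k + N) b t <= N%:R * b k.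
      rewrite -big_ltn //.
      apply: le_trans (_ : _ <= \sum_(k <= t < k+N) b k) _; last first.
        by rewrite sumr_const_nat addKn mulr_natl.
      apply: ler_sum_nat => t /andP[h1 h2]; apply: hrr => //.
      exact: ltn_trans h2 kNm.
    rewrite mulrDr; have H := lerD h1 IH'; by rewrite !addrA in H *.
  + rewrite [X in _ <= _ * (_ + X)]big_nat_cond [X in _ <= _ * (_ + X)]big1 ?addr0; last first.
      move=> t /andP[/andP[h1 h2] /eqP]; rewrite -hk => h3.
      by have := mod_neq h1 (leq_trans h2 mkN); rewrite h3 eqxx.
    have h1 : \sum_(k.+1 <= t < m) b t <= (m - k.+1)%:R * b k.
      apply: le_trans (_ : _ <= \sum_(k.+1 <= t < m) b k) _; last first.
        by rewrite sumr_const_nat mulr_natl.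
      apply: ler_sum_nat => t /andP[h1 h2]; apply: hrr => //; exact: ltnW.
    have hj : (m - k.+1 <= N - 1)%N.
      by lia.
    set j := (m - k.+1)%N in h1 hj *.
    have -> : N = (1 + j + (N - 1 - j))%N by lia.
    have -> : (1 + j + (N - 1 - j) - 1)%N = (j + (N-1-j))%N by lia.
    rewrite !natrD.
    have a0 : 0 <= (N - 1 - j)%:R :> R by rewrite ler0n.
    have c0 : 0 <= j%:R :> R by rewrite ler0n.
    set a := (N - 1 - j)%:R in a0 *; set c := j%:R in h1 c0 *.
    have e1 : c * mu <= 0 by rewrite mulr_ge0_le0.
    have e2 : a * mu <= a * b k by rewrite ler_wpM2l.
    nra.
- rewrite [X in _ <= _ * X]big_ltn_cond // [X in X + _ <= _]big_ltn // (negbTE hk).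
  have := IH k.+1 ltac:(lia).
  have := hb _ km; case/andP=> _ bk0.
  move=> h; lra.
Qed.

Section Aux.
Variable R : realFieldType.

Lemma minover_le (I : finType) (F : I -> R) j : minover F <= F j.
Proof.
rewrite /minover; case E: (enum I) => [|x s].
  by have := mem_enum I j; rewrite E.
exact: bigmin_le.
Qed.

Lemma le_minover (I : finType) (F : I -> R) b (j : I) :
  (forall i, b <= F i) -> b <= minover F.
Proof.
move=> h; rewrite /minover; case E: (enum I) => [|x s].
  by have := mem_enum I j; rewrite E.
by apply: le_bigmin.
Qed.

Lemma maxover_le (I : finType) (F : I -> R) b (j : I) :
  (forall i, F i <= b) -> maxover F <= b.
Proof.
move=> h; rewrite /maxover; case E: (enum I) => [|x s].
  by have := mem_enum I j; rewrite E.
by apply: bigmax_le.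
Qed.

Lemma le_maxover (I : finType) (F : I -> R) j : F j <= maxover F.
Proof.
rewrite /maxover; case E: (enum I) => [|x s].
  by have := mem_enum I j; rewrite E.
exact: le_bigmax.
Qed.

Lemma util_sub (M : finType) (u : M -> R) (A B : {set M}) :
  (forall x, u x <= 0) -> A \subset B -> util u B <= util u A.
Proof.
move=> hu hAB; rewrite /util (big_setID A) /=.
rewrite (setIidPr hAB) gerDl.
by apply: sumr_le0.
Qed.

Lemma MmS_le_item (M : finType) (N : nat) (u : M -> R) x :
  (0 < N)%N -> (forall y, u y <= 0) -> MmS N u <= u x.
Proof.
move=> N0 hu; rewrite /MmS.
apply: (@maxover_le _ _ _ [ffun=> Ordinal N0]) => f.
apply: le_trans (minover_le _ _ (f x)) _.
apply: le_trans (util_sub _ _ _ _ hu (_ : [set x] \subset part f (f x))) _.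
  by rewrite sub1set /part inE.
by rewrite /util big_set1.
Qed.

Lemma MmS_le_avg (M : finType) (N : nat) (u : M -> R) :
  (0 < N)%N -> N%:R * MmS N u <= \sum_x u x.
Proof.
move=> N0.
have N0' : 0 < N%:R :> R by rewrite ltr0n.
rewrite mulrC -ler_pdivlMr //; rewrite /MmS.
apply: (@maxover_le _ _ _ [ffun=> Ordinal N0]) => f.
rewrite ler_pdivlMr // mulrC.
have -> : \sum_x u x = \sum_(j : 'I_N) util u (part f j).
  rewrite (partition_big (fun x => f x) xpredT) //=.
  apply: eq_bigr => j _; rewrite /util /part; apply: eq_bigl => x.
  by rewrite inE.
set m := minover _.
have -> : N%:R * m = \sum_(j < N) m by rewrite sumr_const card_ord mulr_natl.
by apply: ler_sum => j _; apply: minover_le.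
Qed.

End Aux.

Lemma sum_p (R : realFieldType) (M : finType) (p : seq M) (x0 : M) (P : pred nat) (F : M -> R) :
  perm_eq p (enum M) -> \sum_(x | P (index x p)) F x = \sum_(0 <= t < size p | P t) F (nth x0 p t).
Proof.
move=> hp; have up : uniq p by rewrite (perm_uniq hp) enum_uniq.
have -> : \sum_(x | P (index x p)) F x = \sum_(x <- enum M | P (index x p)) F x.
  by rewrite big_enum_cond; apply: eq_bigl => x; rewrite inE.
rewrite -(perm_big _ hp) (big_nth x0) big_nat_cond [RHS]big_nat_cond.
apply: eq_bigl => t; case h: (0 <= t < size p)%N => //=.
by rewrite index_uniq //; case/andP: h.
Qed.

Lemma part1 (R : realFieldType) (M : finType) (N : nat) (d : 'I_N -> M -> R) (p : seq M) :
  (0 < N)%N -> (0 < #|M|)%N -> nonpositive d -> round_robin_run d p ->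
  forall i : 'I_N, (2 - (N%:R)^-1) * MmS N (d i) <= util (d i) (rr_bundle p i).
Proof.
move=> N0 M0 hnp [hp hrr0] i.
case/card_gt0P: M0 => x0 _.
set mu := MmS N (d i).
have hu : forall y, d i y <= 0 by move=> y; exact: hnp.
have mux : forall y, mu <= d i y by move=> y; exact: MmS_le_item.
have mu0 : mu <= 0 := le_trans (mux x0) (hu x0).
set b := fun t => d i (nth x0 p t).
have eS : util (d i) (rr_bundle p i) = \sum_(0 <= t < size p | (t %% N)%N == i) b t.
  rewrite /util /rr_bundle -(@sum_p _ _ p x0 (fun t => (t %% N)%N == i)) //.
  by apply: eq_bigl => x; rewrite inE.
have eA : \sum_x d i x = \sum_(0 <= t < size p) b t.
  by rewrite -(@sum_p _ _ p x0 xpredT).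
have hb : forall t, (t < size p)%N -> mu <= b t <= 0.
  by move=> t _; rewrite mux hu.
have hrr : forall t u, (t %% N)%N = i -> (t <= u)%N -> (u < size p)%N -> b u <= b t.
  move=> t u ht htu hup.
  have ht' : (t < size p)%N by exact: leq_ltn_trans htu hup.
  have E : p = take t p ++ nth x0 p t :: drop t.+1 p by rewrite -drop_nth // cat_take_drop.
  apply: (hrr0 _ _ _ E i); first by rewrite size_take ht'.
  rewrite -drop_nth //.
  have -> : nth x0 p u = nth x0 (drop t p) (u - t) by rewrite nth_drop subnKC.
  by apply: mem_nth; rewrite size_drop ltn_sub2r.
have K := @key _ b mu N i (size p) N0 mu0 hb hrr 0.
have A := @MmS_le_avg _ _ N (d i) N0.
rewrite -/mu eA in A; rewrite eS.
set S := \sum_(0 <= t < size p | (t %% N)%N == i) b t in K *.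
set T := \sum_(0 <= t < size p) b t in K A *.
have Np : 0 < N%:R :> R by rewrite ltr0n.
rewrite natrB // in K.
have hinv : N%:R * N%:R^-1 = 1 :> R by rewrite mulfV // gt_eqF.
rewrite -(ler_pM2l Np) mulrA mulrBr hinv.
nra.
Qed.

Lemma part2 (R : realFieldType) (N : nat) : (0 < N)%N ->
     exists (M : finType) (d : 'I_N -> M -> R) (p : seq M) (i : 'I_N),
       [/\ (0 < #|M|)%N, nonpositive d, round_robin_run d p,
           MmS N (d i) < 0 &
           util (d i) (rr_bundle p i) = (2 - (N%:R)^-1) * MmS N (d i)].
Proof.
case: N => // n _.
pose d : 'I_n.+1 -> option 'I_(n * n.+1) -> R :=
  fun _ x => if x is Some _ then -1 else - (n.+1)%:R.
pose p := map Some (enum 'I_(n * n.+1)) ++ [:: None].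
have up : uniq p.
  rewrite cat_uniq (map_inj_uniq (@Some_inj _)) enum_uniq /= andbT orbF.
  by apply/mapP => -[x _].
have hp : perm_eq p (enum {: option 'I_(n * n.+1)}).
  apply: uniq_perm => //; first exact: enum_uniq.
  move=> x; rewrite mem_enum; case: x => [x|]; rewrite mem_cat ?mem_head ?orbT //.
  by rewrite map_f // mem_enum.
have hnp : nonpositive d.
  by move=> j [x|]; rewrite /d ?lerN10 // oppr_le0 ler0n.
have hrr : round_robin_run d p.
  split => // s1 x s2 E j _ y hy.
  case: x E hy => [x|] E hy.
    by rewrite /d; case: y hy => [y|] _; rewrite ?lexx // lerN2 ler1n.
  have hl : last None p = None by rewrite /p last_cat.
  rewrite E last_cat /= in hl.
  have up' := up; rewrite E cat_uniq /= in up'.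
  case: s2 E hy hl up' => [|z s2] E hy hl up'.
    by move: hy; rewrite mem_seq1 => /eqP ->.
  case/and3P: up' => _ _ /andP[/negP nN _].
  by exfalso; apply: nN; move: hl => /= hl; have := mem_last z s2; rewrite hl.
have M0 : (0 < #|{: option 'I_(n * n.+1)}|)%N by apply/card_gt0P; exists None.
have hu : forall y, d ord0 y <= 0 by move=> y; exact: hnp.
have hup : MmS n.+1 (d ord0) <= - (n.+1)%:R.
  exact: (@MmS_le_item _ _ n.+1 (d ord0) None (ltn0Sn n) hu).
pose f : {ffun option 'I_(n * n.+1) -> 'I_n.+1} := [ffun x : option 'I_(n * n.+1) =>
             if x is Some t then inord (nat_of_ord t %/ n.+1) else ord_max].
have fS : forall t : 'I_(n * n.+1), (t %/ n.+1 < n)%N.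
  by move=> t; rewrite ltn_divLR.
have fSv : forall t : 'I_(n * n.+1), f (Some t) = (t %/ n.+1)%N :> nat.
  by move=> t; rewrite ffunE inordK // ltnS ltnW.
have hlo : - (n.+1)%:R <= MmS n.+1 (d ord0).
  apply: le_trans (le_maxover _ _ _ f); apply: (le_minover _ _ _ _ ord0) => j.
  have [hj|hj] := ltnP j n.
  - have lt : forall r : 'I_n.+1, (j * n.+1 + r < n * n.+1)%N.
      move=> r; have := ltn_ord r; have := hj; nia.
    pose g r := Some (Ordinal (lt r)).
    have sub : part f j \subset [set g r | r : 'I_n.+1].
      apply/subsetP => x; rewrite /part inE; case: x => [t|]; last first.
        by rewrite ffunE => /eqP hh; move: hj; rewrite -hh /= ltnn.
      move=> /eqP hh; apply/imsetP.
      exists (Ordinal (ltn_pmod t (ltn0Sn n))) => //.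
      rewrite /g; congr Some; apply: val_inj => /=.
      by rewrite [X in X = _](divn_eq t n.+1) -(fSv t) hh.
    apply: le_trans (util_sub _ _ _ _ _ hu sub).
    rewrite /util big_imset /=; last first.
      by move=> r1 r2 _ _ [] /addnI /val_inj.
    by rewrite /d sumr_const card_ord -mulNrn.
  - have sub : part f j \subset [set None].
      apply/subsetP => x; rewrite /part inE; case: x => [t|]; rewrite ?inE //.
      move=> /eqP hh; have := fS t; rewrite -fSv hh ltnNge; by rewrite hj.
    apply: le_trans (util_sub _ _ _ _ _ hu sub).
    by rewrite /util big_set1.
have hM : MmS n.+1 (d ord0) = - (n.+1)%:R by apply/le_anti; rewrite hup hlo.
have ltk : forall k : 'I_n, (k * n.+1 < n * n.+1)%N by move=> k; rewrite ltn_pmul2r.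
pose gk k := Some (Ordinal (ltk k)).
pose B := None |: [set gk k | k : 'I_n].
have subB : B \subset rr_bundle p (ord0 : 'I_n.+1).
  apply/subsetP => x; rewrite /rr_bundle !inE; case/orP => [/eqP ->|/imsetP [k _ ->]].
  - rewrite /p index_cat ifF; last by apply/mapP => -[].
    by rewrite size_map size_enum_ord /= addn0 modnMl.
  - rewrite /p index_cat /gk map_f ?mem_enum // index_map; last exact: Some_inj.
    by rewrite index_enum_ord /= modnMl.
have utilB : util (d ord0) B = - (n.+1)%:R - n%:R.
  rewrite /util big_setU1 /=; last by apply/imsetP => -[].
  rewrite big_imset /=; last by move=> k1 k2 _ _ [] /eqP; rewrite eqn_pmul2r // => /eqP /val_inj.
  by rewrite /d sumr_const card_ord mulNrn.
exists (option 'I_(n * n.+1)), d, p, ord0; split => //.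
  by rewrite hM oppr_lt0 ltr0n.
have lo := @part1 _ _ _ d p (ltn0Sn n) M0 hnp hrr ord0.
have hi := util_sub _ _ _ _ _ hu subB.
rewrite utilB in hi; rewrite hM in lo *.
have e : (2 - (n.+1)%:R^-1) * - (n.+1)%:R = - (n.+1)%:R - n%:R :> R.
  rewrite mulrN mulrBl mulVf ?pnatr_eq0 // -natr1; lra.
rewrite e in lo *; apply/le_anti; by rewrite hi lo.
Qed.

Theorem theorem1 (R : realFieldType) :
  (forall (M : finType) (N : nat) (d : 'I_N -> M -> R) (p : seq M),
     (0 < N)%N -> (0 < #|M|)%N -> nonpositive d -> round_robin_run d p ->
     forall i : 'I_N,
       (2 - (N%:R)^-1) * MmS N (d i) <= util (d i) (rr_bundle p i))
  /\
  (forall N : nat, (0 < N)%N ->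
     exists (M : finType) (d : 'I_N -> M -> R) (p : seq M) (i : 'I_N),
       [/\ (0 < #|M|)%N, nonpositive d, round_robin_run d p,
           MmS N (d i) < 0 &
           util (d i) (rr_bundle p i) = (2 - (N%:R)^-1) * MmS N (d i)]).
Proof.
split; [exact: part1 | exact: part2].
Qed.
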